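(* Let $X$ be a connected separable Tychonoff space and let $Z$ be a topological space having the same multi-deck as $X$, i.e.\ there is a bijection $f\colon X \to Z$ such that $X\setminus\{x\}$ is homeomorphic to $Z \setminus\{f(x)\}$ for every $x \in X$. Then $Z$ is a connected separable Tychonoff space.
   Context: The multi-deck of a space $X$ is the multiset $\{[X\setminus\{x\}]_\sim : x \in X\}$ of homeomorphism classes of the subspaces $X\setminus\{x\}$, recording for each class how many points $x$ give it; two spaces have the same multi-deck exactly when there is a bijection $f\colon X\to Z$ with $X\setminus\{x\}\cong Z\setminus\{f(x)\}$ for all $x$. Tychonoff means completely regular and $T_1$. *)

(* Defs.v *)
From Stdlib Require Import Reals.
Open Scope R_scope.

Definition topology {T : Type} (op : (T -> Prop) -> Prop) : Prop :=
  op (fun _ => True) /\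
  (forall U V, op U -> op V -> op (fun x => U x /\ V x)) /\
  (forall F : (T -> Prop) -> Prop,
      (forall U, F U -> op U) -> op (fun x => exists U, F U /\ U x)).

Definition subspace_open {T : Type} (op : (T -> Prop) -> Prop) (A : T -> Prop)
  : ({x : T | A x} -> Prop) -> Prop :=
  fun V => exists U, op U /\ forall y : {x : T | A x}, V y <-> U (proj1_sig y).

Definition continuous {S T : Type} (opS : (S -> Prop) -> Prop)
  (opT : (T -> Prop) -> Prop) (f : S -> T) : Prop :=
  forall V, opT V -> opS (fun x => V (f x)).

Definition homeomorphic {S T : Type} (opS : (S -> Prop) -> Prop)
  (opT : (T -> Prop) -> Prop) : Prop :=
  exists (f : S -> T) (g : T -> S),
    (forall x, g (f x) = x) /\ (forall y, f (g y) = y) /\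
    continuous opS opT f /\ continuous opT opS g.

Definition punctured {T : Type} (op : (T -> Prop) -> Prop) (x : T) :=
  subspace_open op (fun y => y <> x).

Definition connected {T : Type} (op : (T -> Prop) -> Prop) : Prop :=
  forall U, op U -> op (fun x => ~ U x) -> (forall x, U x) \/ (forall x, ~ U x).

Definition countable_set {T : Type} (D : T -> Prop) : Prop :=
  exists g : T -> nat, forall x y, D x -> D y -> g x = g y -> x = y.

Definition dense {T : Type} (op : (T -> Prop) -> Prop) (D : T -> Prop) : Prop :=
  forall U, op U -> (exists x, U x) -> exists x, U x /\ D x.

Definition separable {T : Type} (op : (T -> Prop) -> Prop) : Prop :=
  exists D, countable_set D /\ dense op D.

Definition T1 {T : Type} (op : (T -> Prop) -> Prop) : Prop :=
  forall x y : T, x <> y -> exists U, op U /\ U x /\ ~ U y.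

Definition R_open : (R -> Prop) -> Prop := fun U => open_set U.

Definition completely_regular {T : Type} (op : (T -> Prop) -> Prop) : Prop :=
  forall (C : T -> Prop) (x : T), op (fun y => ~ C y) -> ~ C x ->
    exists f : T -> R, continuous op R_open f /\
      (forall y, 0 <= f y <= 1) /\ f x = 0 /\ (forall y, C y -> f y = 1).

Definition tychonoff {T : Type} (op : (T -> Prop) -> Prop) : Prop :=
  completely_regular op /\ T1 op.

(* Main.v *)
Require Import Defs.
From Stdlib Require Import Reals Lra Lia Classical ClassicalEpsilon FunctionalExtensionality PropExtensionality ProofIrrelevance.
From Stdlib Require Cantor.
Open Scope R_scope.

Lemma op_ext {T} (op : (T -> Prop) -> Prop) (U V : T -> Prop) :
  (forall x, U x <-> V x) -> op U -> op V.
Proof.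
  intros H HU. assert (U = V) as ->; [|exact HU].
  apply functional_extensionality; intro x; apply propositional_extensionality; apply H.
Qed.

Lemma sig_ext {A : Type} {P : A -> Prop} (u v : sig P) : proj1_sig u = proj1_sig v -> u = v.
Proof. destruct u as [u hu], v as [v hv]; simpl; intros ->. f_equal; apply proof_irrelevance. Qed.

Lemma op_inter {T} (op : (T -> Prop) -> Prop) (h : topology op) U V :
  op U -> op V -> op (fun x => U x /\ V x).
Proof. destruct h as [_ [h _]]; auto. Qed.

Lemma op_union2 {T} (op : (T -> Prop) -> Prop) (h : topology op) U V :
  op U -> op V -> op (fun x => U x \/ V x).
Proof.
  intros HU HV. destruct h as [_ [_ h]].
  specialize (h (fun W => W = U \/ W = V)).
  eapply op_ext; [|apply h; intros W [->| ->]; auto].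
  intro x; split.
  - intros [W [[->| ->] HW]]; auto.
  - intros [Hx|Hx]; [exists U|exists V]; auto.
Qed.

Lemma op_empty {T} (op : (T -> Prop) -> Prop) (h : topology op) : op (fun _ => False).
Proof.
  destruct h as [_ [_ h]]. specialize (h (fun _ => False)).
  eapply op_ext; [|apply h; intros; contradiction].
  intro x; split; [intros [W [[] _]]|intros []].
Qed.

Lemma op_full {T} (op : (T -> Prop) -> Prop) (h : topology op) : op (fun _ => True).
Proof. apply h. Qed.

Lemma T1_open {T} (op : (T -> Prop) -> Prop) (h : topology op) (h1 : T1 op) (x : T) :
  op (fun y => y <> x).
Proof.
  destruct h as [_ [_ h]]. specialize (h (fun U => op U /\ ~ U x)).
  eapply op_ext; [|apply h; intros U [HU _]; exact HU].
  intro y; split.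
  - intros [W [[_ HW] Hy]] ->; auto.
  - intros Hy. destruct (h1 y x) as [U [HU [Uy Ux]]]; auto. exists U; auto.
Qed.

Section Unc.
Variable u : nat -> R.
Fixpoint iv (n : nat) : R * R :=
  match n with
  | O => (0, 1)
  | S n => let (a, b) := iv n in
           if Rlt_dec (u n) ((a + b) / 2) then (a + 2 * (b - a) / 3, b)
           else (a, a + (b - a) / 3)
  end.

Lemma iv_step n : fst (iv n) < snd (iv n) ->
  fst (iv n) <= fst (iv (S n)) /\ snd (iv (S n)) <= snd (iv n) /\
  fst (iv (S n)) < snd (iv (S n)) /\
  (forall c, fst (iv (S n)) <= c <= snd (iv (S n)) -> c <> u n).
Proof.
  simpl. destruct (iv n) as [a b]; simpl. intro Hab.
  destruct (Rlt_dec (u n) ((a + b) / 2)); simpl.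
  - split; [lra|split; [lra|split; [lra|intros c Hc ->; lra]]].
  - split; [lra|split; [lra|split; [lra|intros c Hc ->; lra]]].
Qed.

Lemma iv_lt n : fst (iv n) < snd (iv n).
Proof. induction n; [simpl; lra|]. apply iv_step; auto. Qed.

Lemma iv_mono n k : fst (iv n) <= fst (iv (n + k)) /\ snd (iv (n + k)) <= snd (iv n).
Proof.
  induction k; [rewrite Nat.add_0_r; lra|].
  rewrite Nat.add_succ_r. destruct (iv_step (n + k) (iv_lt _)) as [? [? _]]. lra.
Qed.

Lemma iv_ab n m : fst (iv n) <= snd (iv m).
Proof.
  destruct (Nat.le_ge_cases n m) as [H|H].
  - replace m with (n + (m - n))%nat by lia. destruct (iv_mono n (m - n)).
    pose proof (iv_lt (n + (m - n))). lra.
  - replace n with (m + (n - m))%nat by lia. destruct (iv_mono m (n - m)).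
    pose proof (iv_lt (m + (n - m))). lra.
Qed.

Lemma unc01 : exists c, 0 <= c <= 1 /\ forall n, u n <> c.
Proof.
  destruct (completeness (fun x => exists n, x = fst (iv n))) as [c [Hub Hlub]].
  - exists 1. intros x [n ->]. apply (iv_ab n 0).
  - exists 0. exists O. reflexivity.
  - assert (Hc : forall n, fst (iv n) <= c <= snd (iv n)).
    { intro n; split. apply Hub; eauto. apply Hlub. intros x [m ->]. apply iv_ab. }
    exists c. split. { pose proof (Hc O). simpl in H. lra. }
    intros n Hn. destruct (iv_step n (iv_lt n)) as [_ [_ [_ H]]].
    apply (H c (Hc (S n))). auto.
Qed.
End Unc.

Lemma homeo_sym {S T} (opS : (S -> Prop) -> Prop) (opT : (T -> Prop) -> Prop) :
  homeomorphic opS opT -> homeomorphic opT opS.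
Proof. intros [f [g [h1 [h2 [h3 h4]]]]]. exists g, f; auto. Qed.

Lemma tr {S T} (opS : (S -> Prop) -> Prop) (opT : (T -> Prop) -> Prop)
  (hS : topology opS) (hT1 : T1 opS) (s : S) (t : T)
  (phi : {y | y <> s} -> {y | y <> t})
  (hphi : continuous (punctured opS s) (punctured opT t) phi)
  (W : T -> Prop) (hW : opT W) :
  exists P, opS P /\ ~ P s /\ forall u, P (proj1_sig u) <-> W (proj1_sig (phi u)).
Proof.
  destruct (hphi (fun v => W (proj1_sig v))) as [U [HU HUe]].
  { exists W; split; auto. intro; tauto. }
  exists (fun y => U y /\ y <> s). split; [|split].
  - apply op_inter; auto. apply T1_open; auto.
  - intros [_ H]; auto.
  - intro u. rewrite (HUe u). destruct u; simpl; tauto.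
Qed.

Lemma sub_cont {S T} (opS : (S -> Prop) -> Prop) (opT : (T -> Prop) -> Prop)
  (s : S) (t : T) (phi : {y | y <> s} -> {y | y <> t})
  (hphi : continuous (punctured opS s) (punctured opT t) phi)
  (W : T -> Prop) (hW : opT W) :
  exists P, opS P /\ forall u, P (proj1_sig u) <-> W (proj1_sig (phi u)).
Proof.
  destruct (hphi (fun v => W (proj1_sig v))) as [U [HU HUe]].
  { exists W; split; auto. intro; tauto. }
  exists U. split; auto. intro u. rewrite (HUe u). tauto.
Qed.

Definition split2 {T} (op : (T -> Prop) -> Prop) (x : T) :=
  exists P1 P2 : T -> Prop, op P1 /\ op P2 /\ (exists y, P1 y) /\ (exists y, P2 y) /\
    (forall y, P1 y -> P2 y -> False) /\ (forall y, y <> x -> P1 y \/ P2 y) /\ ~ P1 x /\ ~ P2 x.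

Definition split3 {T} (op : (T -> Prop) -> Prop) (x : T) (P1 P2 P3 : T -> Prop) :=
  op P1 /\ op P2 /\ op P3 /\ (exists y, P1 y) /\ (exists y, P2 y) /\ (exists y, P3 y) /\
    (forall y, P1 y -> P2 y -> False) /\ (forall y, P1 y -> P3 y -> False) /\
    (forall y, P2 y -> P3 y -> False) /\
    (forall y, y <> x -> P1 y \/ P2 y \/ P3 y) /\ ~ P1 x /\ ~ P2 x /\ ~ P3 x.

Lemma split2_tr {S T} (opS : (S -> Prop) -> Prop) (opT : (T -> Prop) -> Prop)
  (hS : topology opS) (hT1 : T1 opS) (s : S) (t : T) :
  homeomorphic (punctured opS s) (punctured opT t) -> split2 opT t -> split2 opS s.
Proof.
  intros [phi [psi [h1 [h2 [h3 h4]]]]] [W1 [W2 [o1 [o2 [[w1 e1] [[w2 e2] [d [c [n1 n2]]]]]]]]].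
  destruct (tr opS opT hS hT1 s t phi h3 W1 o1) as [P1 [q1 [r1 e1']]].
  destruct (tr opS opT hS hT1 s t phi h3 W2 o2) as [P2 [q2 [r2 e2']]].
  exists P1, P2. repeat split; auto.
  - assert (hw : w1 <> t) by (intros ->; auto).
    exists (proj1_sig (psi (exist _ w1 hw))). apply e1'. rewrite h2; auto.
  - assert (hw : w2 <> t) by (intros ->; auto).
    exists (proj1_sig (psi (exist _ w2 hw))). apply e2'. rewrite h2; auto.
  - intros y p1 p2. assert (hy : y <> s) by (intros ->; auto).
    apply (d (proj1_sig (phi (exist _ y hy)))).
    apply (e1' (exist _ y hy)); auto. apply (e2' (exist _ y hy)); auto.
  - intros y hy. destruct (c (proj1_sig (phi (exist _ y hy)))) as [H|H].
    + apply (proj2_sig (phi (exist _ y hy))).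
    + left. apply (e1' (exist _ y hy)); auto.
    + right. apply (e2' (exist _ y hy)); auto.
Qed.

Lemma split3_tr {S T} (opS : (S -> Prop) -> Prop) (opT : (T -> Prop) -> Prop)
  (hS : topology opS) (hT1 : T1 opS) (s : S) (t : T) :
  homeomorphic (punctured opS s) (punctured opT t) ->
  (exists W1 W2 W3, split3 opT t W1 W2 W3) -> exists P1 P2 P3, split3 opS s P1 P2 P3.
Proof.
  intros [phi [psi [h1 [h2 [h3 h4]]]]]
    [W1 [W2 [W3 [o1 [o2 [o3 [[w1 e1] [[w2 e2] [[w3 e3] [d12 [d13 [d23 [c [n1 [n2 n3]]]]]]]]]]]]]]].
  destruct (tr opS opT hS hT1 s t phi h3 W1 o1) as [P1 [q1 [r1 e1']]].
  destruct (tr opS opT hS hT1 s t phi h3 W2 o2) as [P2 [q2 [r2 e2']]].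
  destruct (tr opS opT hS hT1 s t phi h3 W3 o3) as [P3 [q3 [r3 e3']]].
  exists P1, P2, P3. repeat split; auto.
  - assert (hw : w1 <> t) by (intros ->; auto).
    exists (proj1_sig (psi (exist _ w1 hw))). apply e1'. rewrite h2; auto.
  - assert (hw : w2 <> t) by (intros ->; auto).
    exists (proj1_sig (psi (exist _ w2 hw))). apply e2'. rewrite h2; auto.
  - assert (hw : w3 <> t) by (intros ->; auto).
    exists (proj1_sig (psi (exist _ w3 hw))). apply e3'. rewrite h2; auto.
  - intros y p1 p2. assert (hy : y <> s) by (intros ->; auto).
    apply (d12 (proj1_sig (phi (exist _ y hy)))).
    apply (e1' (exist _ y hy)); auto. apply (e2' (exist _ y hy)); auto.
  - intros y p1 p2. assert (hy : y <> s) by (intros ->; auto).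
    apply (d13 (proj1_sig (phi (exist _ y hy)))).
    apply (e1' (exist _ y hy)); auto. apply (e3' (exist _ y hy)); auto.
  - intros y p1 p2. assert (hy : y <> s) by (intros ->; auto).
    apply (d23 (proj1_sig (phi (exist _ y hy)))).
    apply (e2' (exist _ y hy)); auto. apply (e3' (exist _ y hy)); auto.
  - intros y hy. destruct (c (proj1_sig (phi (exist _ y hy)))) as [H|[H|H]].
    + apply (proj2_sig (phi (exist _ y hy))).
    + left. apply (e1' (exist _ y hy)); auto.
    + right; left. apply (e2' (exist _ y hy)); auto.
    + right; right. apply (e3' (exist _ y hy)); auto.
Qed.

Lemma no_open_singleton {T} (op : (T -> Prop) -> Prop) (h : topology op) (h1 : T1 op)
  (hc : connected op) (P : T -> Prop) (y z : T) :
  op P -> P y -> (forall y', P y' -> y' = y) -> z <> y -> False.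
Proof.
  intros HP Py Pu zy.
  assert (Hc : op (fun x => ~ P x)).
  { eapply op_ext; [|apply (T1_open op h h1 y)]. intro x; split.
    - intros H H'; apply H, Pu; auto.
    - intros H H'; rewrite H' in H; exact (H Py). }
  destruct (hc P HP Hc) as [H|H].
  - apply zy, Pu, H.
  - apply (H y Py).
Qed.

Lemma third_point {T} (op : (T -> Prop) -> Prop) (h : topology op) (h1 : T1 op)
  (hc : connected op) (x1 x2 : T) : x1 <> x2 -> exists x3, x3 <> x1 /\ x3 <> x2.
Proof.
  intro H. apply NNPP; intro Hn.
  apply (no_open_singleton op h h1 hc (fun y => y <> x2) x1 x2); auto.
  - apply T1_open; auto.
  - intros y' Hy'. apply NNPP; intro; apply Hn; eauto.
Qed.

Lemma open_lt (c : R) : R_open (fun r => r < c).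
Proof.
  intros x Hx. exists (mkposreal (c - x) ltac:(lra)). intros y Hy.
  unfold disc in Hy; simpl in Hy. apply Rabs_def2 in Hy. lra.
Qed.

Lemma open_gt (c : R) : R_open (fun r => c < r).
Proof.
  intros x Hx. exists (mkposreal (x - c) ltac:(lra)). intros y Hy.
  unfold disc in Hy; simpl in Hy. apply Rabs_def2 in Hy. lra.
Qed.

Lemma countable_contra {T} (op : (T -> Prop) -> Prop) (h : topology op)
  (hc : connected op) (ht : tychonoff op) (x0 y0 : T) (e : T -> nat) :
  x0 <> y0 -> (forall a b, e a = e b -> a = b) -> False.
Proof.
  intros hxy he. destruct ht as [hcr h1].
  destruct (hcr (fun y => y = y0) x0 (T1_open op h h1 y0) hxy) as [g [gc [gb [g0 g1]]]].
  set (u := fun n => match excluded_middle_informative (exists x, e x = n) with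
                     | left H => g (proj1_sig (constructive_indefinite_description _ H))
                     | right _ => 0 end).
  assert (hu : forall x, u (e x) = g x).
  { intro x. unfold u. destruct excluded_middle_informative as [H|H].
    - destruct constructive_indefinite_description as [x' hx']; simpl. rewrite (he _ _ hx'); auto.
    - exfalso; eauto. }
  destruct (unc01 u) as [c [hc01 hcu]].
  destruct (hc (fun y => g y < c)) as [H|H].
  - apply (gc _ (open_lt c)).
  - eapply op_ext; [|apply (gc _ (open_gt c))]. intro y; simpl. split.
    + intros; lra.
    + intro. assert (g y <> c) by (rewrite <- hu; auto). lra.
  - specialize (H y0). rewrite g1 in H; auto. lra.
  - apply (H x0). assert (g x0 <> c) by (rewrite <- hu; auto). lra.
Qed.

Lemma piece_sub {T} (op : (T -> Prop) -> Prop) (h : topology op) (hc : connected op)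
  (x y : T) (P Pc M Mc : T -> Prop) :
  op P -> op Pc -> (forall w, P w -> Pc w -> False) -> (forall w, w <> x -> P w \/ Pc w) -> ~ P x ->
  op M -> op Mc -> (forall w, M w -> Mc w -> False) -> (forall w, w <> y -> M w \/ Mc w) ->
  M x -> ~ P y -> forall w, P w -> M w.
Proof.
  intros oP oPc dP cP nPx oM oMc dM cM Mx nPy.
  destruct (hc (fun w => P w /\ Mc w)) as [H|H].
  - apply op_inter; auto.
  - eapply op_ext; [|apply (op_union2 op h Pc M oPc oM)]. intro w; split.
    + intros [H|H] [H1 H2]; eauto.
    + intro H. destruct (classic (w = x)) as [->|nx]; [auto|].
      destruct (cP w nx) as [Pw|Pcw]; auto.
      right. assert (w <> y) by (intros ->; auto).
      destruct (cM w) as [|Mcw]; auto. exfalso; auto.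
  - exfalso. apply nPx, (H x).
  - intros w Pw. assert (w <> y) by (intros ->; auto).
    destruct (cM w) as [|Mcw]; auto. exfalso; apply (H w); auto.
Qed.

Lemma piece_sub3 {T} (op : (T -> Prop) -> Prop) (h : topology op) (hc : connected op)
  (x y : T) P1 P2 P3 Q1 Q2 Q3 :
  split3 op x P1 P2 P3 -> split3 op y Q1 Q2 Q3 -> ~ P1 y -> Q1 x -> forall w, P1 w -> Q1 w.
Proof.
  intros [o1 [o2 [o3 [_ [_ [_ [d12 [d13 [d23 [c [n1 [n2 n3]]]]]]]]]]]]
         [p1 [p2 [p3 [_ [_ [_ [e12 [e13 [e23 [c' [m1 [m2 m3]]]]]]]]]]]].
  intros Hy Hx.
  apply (piece_sub op h hc x y P1 (fun w => P2 w \/ P3 w) Q1 (fun w => Q2 w \/ Q3 w)); auto;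
  first [ apply op_union2; auto
        | intros w a [b|b]; eauto
        | intros w hw; first [destruct (c w hw) as [|[|]] | destruct (c' w hw) as [|[|]]]; auto ].
Qed.

Lemma s3_12 {T} (op : (T -> Prop) -> Prop) x P1 P2 P3 :
  split3 op x P1 P2 P3 -> split3 op x P2 P1 P3.
Proof.
  intros [o1 [o2 [o3 [e1 [e2 [e3 [d12 [d13 [d23 [c [n1 [n2 n3]]]]]]]]]]]].
  repeat split; eauto. intros y hy; destruct (c y hy) as [|[|]]; auto.
Qed.

Lemma s3_13 {T} (op : (T -> Prop) -> Prop) x P1 P2 P3 :
  split3 op x P1 P2 P3 -> split3 op x P3 P2 P1.
Proof.
  intros [o1 [o2 [o3 [e1 [e2 [e3 [d12 [d13 [d23 [c [n1 [n2 n3]]]]]]]]]]]].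
  repeat split; eauto. intros y hy; destruct (c y hy) as [|[|]]; auto.
Qed.

Lemma split3_inj {T} (op : (T -> Prop) -> Prop) (h : topology op) (hc : connected op)
  (x y : T) P1 P2 P3 Q1 Q2 Q3 d1 d2 d3 :
  split3 op x P1 P2 P3 -> split3 op y Q1 Q2 Q3 -> x <> y ->
  P1 d1 -> P2 d2 -> P3 d3 -> Q1 d1 -> Q2 d2 -> Q3 d3 -> False.
Proof.
  intros HP HQ hxy a1 a2 a3 b1 b2 b3.
  pose proof HP as [o1 [o2 [o3 [e1 [e2 [e3 [d12 [d13 [d23 [c [n1 [n2 n3]]]]]]]]]]]].
  pose proof HQ as [p1 [p2 [p3 [f1 [f2 [f3 [g12 [g13 [g23 [c' [m1 [m2 m3]]]]]]]]]]]].
  assert (hyx : y <> x) by auto.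
  pose proof (s3_12 _ _ _ _ _ HP) as HP2. pose proof (s3_13 _ _ _ _ _ HP) as HP3.
  pose proof (s3_12 _ _ _ _ _ HQ) as HQ2. pose proof (s3_13 _ _ _ _ _ HQ) as HQ3.
  destruct (c y hyx) as [k|[k|k]]; destruct (c' x hxy) as [m|[m|m]].
  - assert (Q1 d2) by (apply (piece_sub3 op h hc x y _ _ _ _ _ _ HP2 HQ); eauto). eauto.
  - assert (Q2 d3) by (apply (piece_sub3 op h hc x y _ _ _ _ _ _ HP3 HQ2); eauto). eauto.
  - assert (Q3 d2) by (apply (piece_sub3 op h hc x y _ _ _ _ _ _ HP2 HQ3); eauto). eauto.
  - assert (Q1 d3) by (apply (piece_sub3 op h hc x y _ _ _ _ _ _ HP3 HQ); eauto). eauto.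
  - assert (Q2 d1) by (apply (piece_sub3 op h hc x y _ _ _ _ _ _ HP HQ2); eauto). eauto.
  - assert (Q3 d1) by (apply (piece_sub3 op h hc x y _ _ _ _ _ _ HP HQ3); eauto). eauto.
  - assert (Q1 d2) by (apply (piece_sub3 op h hc x y _ _ _ _ _ _ HP2 HQ); eauto). eauto.
  - assert (Q2 d1) by (apply (piece_sub3 op h hc x y _ _ _ _ _ _ HP HQ2); eauto). eauto.
  - assert (Q3 d1) by (apply (piece_sub3 op h hc x y _ _ _ _ _ _ HP HQ3); eauto). eauto.
Qed.

Lemma to_nat_inj (p q : nat * nat) : Cantor.to_nat p = Cantor.to_nat q -> p = q.
Proof. intro H. rewrite <- (Cantor.cancel_of_to p), <- (Cantor.cancel_of_to q), H; auto. Qed.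

Lemma split3_countable {T} (op : (T -> Prop) -> Prop) (h : topology op) (hc : connected op)
  (hs : separable op) (H3 : forall x, exists P1 P2 P3, split3 op x P1 P2 P3) :
  exists e : T -> nat, forall a b, e a = e b -> a = b.
Proof.
  destruct hs as [D [[g hg] hd]].
  assert (Hx : forall x, exists n : nat * nat * nat, exists P1 P2 P3 d1 d2 d3,
     split3 op x P1 P2 P3 /\ D d1 /\ D d2 /\ D d3 /\ P1 d1 /\ P2 d2 /\ P3 d3 /\
     n = (g d1, g d2, g d3)).
  { intro x. destruct (H3 x) as [P1 [P2 [P3 HS]]].
    pose proof HS as [o1 [o2 [o3 [e1 [e2 [e3 _]]]]]].
    destruct (hd P1 o1 e1) as [d1 [a1 b1]].
    destruct (hd P2 o2 e2) as [d2 [a2 b2]].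
    destruct (hd P3 o3 e3) as [d3 [a3 b3]].
    exists (g d1, g d2, g d3), P1, P2, P3, d1, d2, d3. split; [exact HS|]. repeat split; auto. }
  set (code := fun x => proj1_sig (constructive_indefinite_description _ (Hx x))).
  exists (fun x => let '(a, b, c) := code x in Cantor.to_nat (Cantor.to_nat (a, b), c)).
  intros x y Exy.
  assert (Hc : code x = code y).
  { destruct (code x) as [[a b] c], (code y) as [[a' b'] c'].
    apply to_nat_inj in Exy. pose proof (f_equal fst Exy) as E1. pose proof (f_equal snd Exy) as E2.
    cbn [fst snd] in E1, E2. apply to_nat_inj in E1.
    pose proof (f_equal fst E1) as E3. pose proof (f_equal snd E1) as E4.
    cbn [fst snd] in E3, E4. subst; auto. }
  unfold code in Hc.
  destruct (constructive_indefinite_description _ (Hx x)) as [nx [P1 [P2 [P3 [d1 [d2 [d3 [S1 [D1 [D2 [D3 [p1 [p2 [p3 E1]]]]]]]]]]]]]].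
  destruct (constructive_indefinite_description _ (Hx y)) as [ny [Q1 [Q2 [Q3 [f1 [f2 [f3 [S2 [F1 [F2 [F3 [q1 [q2 [q3 E2]]]]]]]]]]]]]].
  simpl in Hc. subst nx ny. injection Hc as G1 G2 G3.
  apply hg in G1; auto. apply hg in G2; auto. apply hg in G3; auto. subst.
  apply NNPP; intro hxy.
  apply (split3_inj op h hc x y P1 P2 P3 Q1 Q2 Q3 f1 f2 f3); auto.
Qed.

Lemma Z_T1 (X Z : Type) (opX : (X -> Prop) -> Prop) (opZ : (Z -> Prop) -> Prop)
  (hX : topology opX) (hconn : connected opX) (h1 : T1 opX)
  (f : X -> Z) (finj : forall a b, f a = f b -> a = b) (fsurj : forall z, exists x, f x = z)
  (hdeck : forall x : X, homeomorphic (punctured opX x) (punctured opZ (f x))) : T1 opZ.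
Proof.
  intros z w hzw.
  destruct (fsurj z) as [xz <-], (fsurj w) as [xw <-].
  assert (hx : xz <> xw) by (intros ->; auto).
  destruct (third_point opX hX h1 hconn xz xw hx) as [x3 [n1 n2]].
  destruct (hdeck x3) as [F [G [e1 [e2 [cF cG]]]]].
  assert (hz : f xz <> f x3) by (intros E; apply n1; symmetry; auto).
  assert (hw : f xw <> f x3) by (intros E; apply n2; symmetry; auto).
  set (vz := exist (fun y => y <> f x3) (f xz) hz).
  set (vw := exist (fun y => y <> f x3) (f xw) hw).
  assert (hG : proj1_sig (G vz) <> proj1_sig (G vw)).
  { intro E. apply sig_ext in E. apply (f_equal F) in E. rewrite !e2 in E.
    apply hzw. apply (f_equal (@proj1_sig _ _)) in E. exact E. }
  destruct (h1 _ _ hG) as [U [HU [Uz Uw]]].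
  destruct (sub_cont opZ opX (f x3) x3 G cG U HU) as [V [HV HVe]].
  exists V. split; [auto|split].
  - apply (HVe vz); auto.
  - intro H. apply Uw. apply (HVe vw); auto.
Qed.

Lemma Z_sep (X Z : Type) (opX : (X -> Prop) -> Prop) (opZ : (Z -> Prop) -> Prop)
  (hX : topology opX) (hsep : separable opX) (h1 : T1 opX)
  (f : X -> Z) (finj : forall a b, f a = f b -> a = b) (fsurj : forall z, exists x, f x = z)
  (hdeck : forall x : X, homeomorphic (punctured opX x) (punctured opZ (f x))) : separable opZ.
Proof.
  destruct (classic (exists x : X, True)) as [[x0 _]|hne].
  2:{ exists (fun _ => False). split.
      - exists (fun _ => O). intros z; destruct (fsurj z) as [x _]; exfalso; eauto.
      - intros U _ [z _]. destruct (fsurj z) as [x _]; exfalso; eauto. }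
  destruct hsep as [D [[g hg] hd]].
  destruct (hdeck x0) as [F [G [e1 [e2 [cF cG]]]]].
  set (p := f x0).
  exists (fun z => z = p \/ exists d (hd : d <> x0), D d /\ proj1_sig (F (exist _ d hd)) = z).
  split.
  - exists (fun z => match excluded_middle_informative (z = p) with
             | left _ => O
             | right h => S (g (proj1_sig (G (exist _ z h)))) end).
    assert (key : forall z (h : z <> p), (exists d (hd : d <> x0), D d /\ proj1_sig (F (exist _ d hd)) = z) ->
                  D (proj1_sig (G (exist _ z h)))).
    { intros z h [d [hd0 [Dd E]]].
      assert (E' : F (exist _ d hd0) = exist _ z h) by (apply sig_ext; auto).
      rewrite <- E', e1. exact Dd. }
    intros z1 z2 H1 H2.
    destruct excluded_middle_informative as [E1|E1]; destruct excluded_middle_informative as [E2|E2];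
      try discriminate; intro Heq.
    + congruence.
    + destruct H1 as [|H1]; [contradiction|]. destruct H2 as [|H2]; [contradiction|].
      injection Heq as Heq. apply hg in Heq; try (apply key; auto).
      apply sig_ext in Heq. apply (f_equal F) in Heq. rewrite !e2 in Heq.
      apply (f_equal (@proj1_sig _ _)) in Heq. exact Heq.
  - intros U HU [t Ut].
    destruct (classic (U p)) as [Up|nUp].
    + exists p; auto.
    + assert (ht : t <> p) by (intros ->; auto).
      destruct (sub_cont opX opZ x0 p F cF U HU) as [U' [HU' HUe]].
      destruct (hd (fun y => U' y /\ y <> x0)) as [d [[U'd dx] Dd]].
      * apply op_inter; auto. apply T1_open; auto.
      * exists (proj1_sig (G (exist _ t ht))). split.
        -- apply HUe. rewrite e2. exact Ut.
        -- apply (proj2_sig (G _)).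
      * exists (proj1_sig (F (exist _ d dx))). split.
        -- apply (HUe (exist _ d dx)). exact U'd.
        -- right. exists d, dx. auto.
Qed.

Lemma CRsub (X Z : Type) (opX : (X -> Prop) -> Prop) (opZ : (Z -> Prop) -> Prop)
  (hX : topology opX) (h1 : T1 opX) (hcr : completely_regular opX) (xw : X) (w : Z)
  (hh : homeomorphic (punctured opX xw) (punctured opZ w))
  (C : Z -> Prop) (t : Z) : opZ (fun y => ~ C y) -> t <> w -> ~ C t ->
  exists h : {y | y <> w} -> R,
    (forall V, R_open V -> exists U, opZ U /\ forall v, V (h v) <-> U (proj1_sig v)) /\
    (forall v, 0 <= h v <= 1) /\ (forall v, proj1_sig v = t -> h v = 0) /\
    (forall v, C (proj1_sig v) -> h v = 1).
Proof.
  intros hC ht nCt.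
  destruct hh as [F [G [e1 [e2 [cF cG]]]]].
  destruct (tr opX opZ hX h1 xw w F cF _ hC) as [P [HP [nPx HPe]]].
  set (vt := exist (fun y => y <> w) t ht).
  destruct (hcr (fun y => ~ P y) (proj1_sig (G vt))) as [fx [cfx [bfx [f0 f1]]]].
  - eapply op_ext; [|exact HP]. intro; tauto.
  - intro H. apply H. apply HPe. rewrite e2. exact nCt.
  - exists (fun v => fx (proj1_sig (G v))). split; [|split; [|split]].
    + intros V HV. destruct (sub_cont opZ opX w xw G cG _ (cfx V HV)) as [U [HU HUe]].
      exists U. split; auto. intro v. rewrite HUe. tauto.
    + intro; apply bfx.
    + intros v Ev. assert (v = vt) as -> by (apply sig_ext; auto). exact f0.
    + intros v Cv. apply f1. intro H. apply HPe in H. rewrite e2 in H. auto.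
Qed.

Lemma Z_cr (X Z : Type) (opX : (X -> Prop) -> Prop) (opZ : (Z -> Prop) -> Prop)
  (hX : topology opX) (hZ : topology opZ) (hconn : connected opX) (hty : tychonoff opX)
  (f : X -> Z) (finj : forall a b, f a = f b -> a = b) (fsurj : forall z, exists x, f x = z)
  (hdeck : forall x : X, homeomorphic (punctured opX x) (punctured opZ (f x))) :
  completely_regular opZ.
Proof.
  destruct hty as [hcr h1].
  pose proof (Z_T1 X Z opX opZ hX hconn h1 f finj fsurj hdeck) as hZ1.
  intros C z hC nCz.
  destruct (classic (exists w, w <> z)) as [[w hw]|hne].
  2:{ exists (fun _ => 0). split; [|split; [|split]].
      - intros V HV. destruct (classic (V 0)) as [V0|V0].
        + eapply op_ext; [|apply (op_full opZ hZ)]. intro; tauto.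
        + eapply op_ext; [|apply (op_empty opZ hZ)]. intro; tauto.
      - intros; lra.
      - auto.
      - intros y Cy. exfalso. assert (y = z) as -> by (apply NNPP; eauto). auto. }
  destruct (fsurj z) as [xz Ez], (fsurj w) as [xw Ew].
  assert (hx : xz <> xw) by (intros ->; congruence).
  destruct (third_point opX hX h1 hconn xz xw hx) as [x3 [n1 n2]].
  set (q := f x3).
  assert (qz : q <> z) by (intro E; apply n1, finj; unfold q in E; congruence).
  assert (qw : q <> w) by (intro E; apply n2, finj; unfold q in E; congruence).
  assert (hhw := hdeck xw). rewrite Ew in hhw.
  destruct (CRsub X Z opX opZ hX h1 hcr xw w hhw (fun y => y = z) q (T1_open opZ hZ hZ1 z) qw qz)
    as [h1' [ch1 [bh1 [h1q h1z]]]].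
  destruct (ch1 _ (open_gt (1/2))) as [UM [HUM HUMe]].
  destruct (ch1 _ (open_lt (1/2))) as [UN [HUN HUNe]].
  set (M := fun y => UM y /\ y <> w).
  set (N := fun y => UN y /\ y <> w).
  assert (MN : forall y, M y -> N y -> False).
  { intros y [a hy] [b _]. set (v := exist (fun y => y <> w) y hy).
    apply (HUMe v) in a. apply (HUNe v) in b. lra. }
  assert (Nq : N q).
  { split; auto. set (v := exist (fun y => y <> w) q qw). apply (HUNe v).
    rewrite (h1q v); auto. lra. }
  assert (Mz : M z).
  { split; auto. set (v := exist (fun y => y <> w) z (not_eq_sym hw)). apply (HUMe v).
    rewrite (h1z v); auto. lra. }
  assert (hh3 := hdeck x3).
  destruct (CRsub X Z opX opZ hX h1 hcr x3 q hh3 (fun y => C y \/ ~ M y) z) as [h2 [ch2 [bh2 [h2z h2K]]]].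
  { eapply op_ext; [|apply (op_inter opZ hZ _ _ hC (op_inter opZ hZ _ _ HUM (T1_open opZ hZ hZ1 w)))].
    intro y; unfold M; tauto. }
  { auto. }
  { intros [H|H]; auto. }
  exists (fun y => match excluded_middle_informative (y = q) with
           | left _ => 1 | right hy => h2 (exist _ y hy) end).
  split; [|split; [|split]].
  - intros V HV. destruct (ch2 V HV) as [U2 [HU2 HU2e]].
    destruct (classic (V 1)) as [V1|V1].
    + eapply op_ext; [|apply (op_union2 opZ hZ _ _ (op_inter opZ hZ _ _ HU2 (T1_open opZ hZ hZ1 q))
                                           (op_inter opZ hZ _ _ HUN (T1_open opZ hZ hZ1 w)))].
      intro y. destruct excluded_middle_informative as [E|E].
      * subst y. split; auto; try (intros _; right; exact Nq).
      * split.
        -- intros [[a _]|b]; [apply HU2e; exact a|]. rewrite h2K; auto. simpl. right. intro Hm. apply (MN y); auto.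
        -- intro H. left. split; auto. apply (HU2e (exist _ y E)) in H. exact H.
    + eapply op_ext; [|apply (op_inter opZ hZ _ _ HU2 (T1_open opZ hZ hZ1 q))].
      intro y. destruct excluded_middle_informative as [E|E].
      * subst y. split; [intros [_ H]; congruence|intro; contradiction].
      * rewrite HU2e. simpl. tauto.
  - intro y. destruct excluded_middle_informative; [lra|apply bh2].
  - destruct excluded_middle_informative as [E|E]; [congruence|]. apply h2z; auto.
  - intros y Cy. destruct excluded_middle_informative as [E|E]; auto.
Qed.

Lemma no_isolated_Z (X Z : Type) (opX : (X -> Prop) -> Prop) (opZ : (Z -> Prop) -> Prop)
  (hX : topology opX) (hconn : connected opX) (h1 : T1 opX)
  (f : X -> Z) (finj : forall a b, f a = f b -> a = b) (fsurj : forall z, exists x, f x = z)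
  (hdeck : forall x : X, homeomorphic (punctured opX x) (punctured opZ (f x)))
  (U : Z -> Prop) (w b : Z) : opZ U -> U w -> (forall y, U y -> y = w) -> b <> w -> False.
Proof.
  intros HU Uw Uu bw.
  destruct (fsurj b) as [xb <-].
  destruct (hdeck xb) as [F [G [e1 [e2 [cF cG]]]]].
  destruct (tr opX opZ hX h1 xb (f xb) F cF U HU) as [P [HP [nP HPe]]].
  set (ws := exist (fun y => y <> f xb) w (not_eq_sym bw)).
  apply (no_open_singleton opX hX h1 hconn P (proj1_sig (G ws)) xb HP).
  - apply HPe. rewrite e2. exact Uw.
  - intros y1 Py1. assert (hy : y1 <> xb) by (intros ->; auto).
    apply (HPe (exist _ y1 hy)) in Py1. apply Uu in Py1.
    assert (E : F (exist _ y1 hy) = ws) by (apply sig_ext; auto).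
    rewrite <- E, e1. reflexivity.
  - intro E. apply (proj2_sig (G ws)). auto.
Qed.

Lemma split2_Z (X Z : Type) (opX : (X -> Prop) -> Prop) (opZ : (Z -> Prop) -> Prop)
  (hX : topology opX) (hZ : topology opZ) (hconn : connected opX) (h1 : T1 opX) (hZ1 : T1 opZ)
  (f : X -> Z) (finj : forall a b, f a = f b -> a = b) (fsurj : forall z, exists x, f x = z)
  (hdeck : forall x : X, homeomorphic (punctured opX x) (punctured opZ (f x)))
  (U : Z -> Prop) (w b : Z) : opZ U -> opZ (fun y => ~ U y) -> U w -> ~ U b -> split2 opZ w.
Proof.
  intros HU HUc Uw Ub.
  exists (fun y => U y /\ y <> w), (fun y => ~ U y).
  split; [apply op_inter; auto; apply T1_open; auto|].
  split; [exact HUc|].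
  split.
  { apply NNPP; intro Hn.
    apply (no_isolated_Z X Z opX opZ hX hconn h1 f finj fsurj hdeck U w b HU Uw).
    + intros y Uy. apply NNPP; intro; apply Hn; eauto.
    + intros ->; auto. }
  split; [exists b; auto|].
  split; [intros y [a _] c; auto|].
  split; [intros y hy; destruct (classic (U y)); auto|].
  split; [intros [_ H]; auto|auto].
Qed.

Lemma split3_Z (X Z : Type) (opX : (X -> Prop) -> Prop) (opZ : (Z -> Prop) -> Prop)
  (hX : topology opX) (hZ : topology opZ) (hconn : connected opX) (h1 : T1 opX) (hZ1 : T1 opZ)
  (f : X -> Z) (fsurj : forall z, exists x, f x = z)
  (hdeck : forall x : X, homeomorphic (punctured opX x) (punctured opZ (f x)))
  (Xs2 : forall x, split2 opX x)
  (U : Z -> Prop) (z b : Z) : opZ U -> opZ (fun y => ~ U y) -> U z -> ~ U b ->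
  exists P1 P2 P3, split3 opZ z P1 P2 P3.
Proof.
  intros HU HUc Uz Ub.
  destruct (fsurj b) as [xb <-].
  destruct (hdeck xb) as [F [G [e1 [e2 [cF cG]]]]].
  destruct (tr opX opZ hX h1 xb (f xb) F cF U HU) as [Q [HQ [nQ HQe]]].
  destruct (tr opX opZ hX h1 xb (f xb) F cF _ HUc) as [R [HR [nR HRe]]].
  assert (QR : forall y, Q y -> R y -> False).
  { intros y a c. assert (hy : y <> xb) by (intros ->; auto).
    apply (HQe (exist _ y hy)) in a. apply (HRe (exist _ y hy)) in c. auto. }
  assert (QRc : forall y, y <> xb -> Q y \/ R y).
  { intros y hy. destruct (classic (U (proj1_sig (F (exist _ y hy))))) as [H|H].
    - left. apply (HQe (exist _ y hy)); auto.
    - right. apply (HRe (exist _ y hy)); auto. }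
  assert (hzb : z <> f xb) by (intros ->; auto).
  set (zs := exist (fun y => y <> f xb) z hzb).
  set (q := proj1_sig (G zs)).
  assert (Qq : Q q) by (apply HQe; rewrite e2; exact Uz).
  assert (qxb : xb <> q) by (intro E; apply (proj2_sig (G zs)); symmetry; exact E).
  assert (HKS : exists K S, opX K /\ opX S /\ (exists y, S y) /\ (forall y, K y -> S y -> False) /\
     (forall y, y <> q -> K y \/ S y) /\ ~ K q /\ ~ S q /\ K xb).
  { destruct (Xs2 q) as [P1 [P2 [o1 [o2 [ne1 [ne2 [d [c [n1 n2]]]]]]]]].
    destruct (c xb qxb) as [H|H].
    - exists P1, P2. repeat split; auto; try (intros y hy; destruct (c y hy); auto).
    - exists P2, P1. repeat split; eauto; try (intros y hy; destruct (c y hy); auto). }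
  destruct HKS as [K [S [HK [HS [[y0 Sy0] [KS [KSc [nKq [nSq Kxb]]]]]]]]].
  assert (SR : forall y, S y -> R y -> False).
  { destruct (hconn (fun y => S y /\ R y)) as [H|H].
    - apply op_inter; auto.
    - eapply op_ext; [|apply (op_union2 opX hX K Q HK HQ)]. intro y; split.
      + intros [a|a] [c d]; eauto.
      + intro H. destruct (classic (y = xb)) as [->|hy]; auto.
        destruct (classic (y = q)) as [->|hq]; auto.
        destruct (KSc y hq) as [|Sy]; auto. right.
        destruct (QRc y hy); auto. exfalso; auto.
    - exfalso. apply nR, (H xb).
    - intros y a c; apply (H y); auto. }
  assert (SQ : forall y, S y -> Q y).
  { intros y Sy. assert (y <> xb) by (intros ->; eauto).
    destruct (QRc y) as [|Ry]; auto. exfalso; eauto. }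
  assert (KQ : exists y, K y /\ Q y).
  { apply NNPP; intro Hn.
    destruct (hconn Q HQ) as [H|H].
    - eapply op_ext; [|exact HK]. intro y; split.
      + intros Ky Qy; apply Hn; eauto.
      + intro nQy. destruct (classic (y = xb)) as [->|hy]; auto.
        destruct (QRc y hy) as [|Ry]; [contradiction|].
        assert (y <> q) by (intros ->; auto).
        destruct (KSc y) as [|Sy]; auto. exfalso; apply nQy, SQ, Sy.
    - apply nQ, H.
    - apply (H q Qq). }
  destruct KQ as [y1 [Ky1 Qy1]].
  destruct (tr opZ opX hZ hZ1 (f xb) xb G cG S HS) as [P2 [HP2 [nP2 HP2e]]].
  destruct (tr opZ opX hZ hZ1 (f xb) xb G cG K HK) as [P3 [HP3 [nP3 HP3e]]].
  exists (fun y => ~ U y), (fun y => P2 y /\ U y /\ y <> z), (fun y => P3 y /\ U y /\ y <> z).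
  assert (Hz : forall y (hy : y <> xb), proj1_sig (F (exist _ y hy)) = z -> y = q).
  { intros y hy E. assert (E' : F (exist _ y hy) = zs) by (apply sig_ext; auto).
    unfold q. rewrite <- E', e1. reflexivity. }
  repeat split.
  - exact HUc.
  - apply op_inter; auto. apply op_inter; auto. apply T1_open; auto.
  - apply op_inter; auto. apply op_inter; auto. apply T1_open; auto.
  - exists (f xb); auto.
  - assert (hy : y0 <> xb) by (intros ->; eauto).
    exists (proj1_sig (F (exist _ y0 hy))). split; [|split].
    + apply HP2e. rewrite e1. exact Sy0.
    + apply (HQe (exist _ y0 hy)). auto.
    + intro E. apply Hz in E. subst. auto.
  - assert (hy : y1 <> xb) by (intros ->; eauto).
    exists (proj1_sig (F (exist _ y1 hy))). split; [|split].
    + apply HP3e. rewrite e1. exact Ky1.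
    + apply (HQe (exist _ y1 hy)). auto.
    + intro E. apply Hz in E. subst. auto.
  - intros y a [_ [c _]]; auto.
  - intros y a [_ [c _]]; auto.
  - intros y [a _] [c _]. assert (hy : y <> f xb) by (intros ->; auto).
    apply (HP2e (exist _ y hy)) in a. apply (HP3e (exist _ y hy)) in c. eauto.
  - intros y hyz. destruct (classic (U y)) as [Uy|Uy]; [|left; auto].
    right. assert (hy : y <> f xb) by (intros ->; auto).
    assert (hg : proj1_sig (G (exist _ y hy)) <> q).
    { intro E. apply sig_ext in E. fold zs in E. apply (f_equal F) in E. rewrite !e2 in E.
      apply hyz. apply (f_equal (@proj1_sig _ _)) in E. exact E. }
    destruct (KSc _ hg) as [H|H].
    + right. split; auto. apply (HP3e (exist _ y hy)); auto.
    + left. split; auto. apply (HP2e (exist _ y hy)); auto.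
  - intro H; auto.
  - intros [_ [_ H]]; auto.
  - intros [_ [_ H]]; auto.
Qed.

Theorem theorem7p4 (X Z : Type) (opX : (X -> Prop) -> Prop) (opZ : (Z -> Prop) -> Prop)
  (hX : topology opX) (hZ : topology opZ)
  (hconn : connected opX) (hsep : separable opX) (hty : tychonoff opX)
  (f : X -> Z) (finj : forall a b, f a = f b -> a = b) (fsurj : forall z, exists x, f x = z)
  (hdeck : forall x : X, homeomorphic (punctured opX x) (punctured opZ (f x))) :
  connected opZ /\ separable opZ /\ tychonoff opZ.
Proof.
  pose proof hty as [hcr h1].
  pose proof (Z_T1 X Z opX opZ hX hconn h1 f finj fsurj hdeck) as hZ1.
  split; [|split].
  - intros U HU HUc.
    destruct (classic (forall x, U x)) as [H|H]; [left; auto|].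
    destruct (classic (forall x, ~ U x)) as [H'|H']; [right; auto|].
    exfalso. apply not_all_ex_not in H as [b Ub]. apply not_all_ex_not in H' as [a Ua].
    apply NNPP in Ua.
    assert (HUc' : opZ (fun y => ~ ~ U y)) by (eapply op_ext; [|exact HU]; intro; tauto).
    assert (Xs2 : forall x, split2 opX x).
    { intro x. apply (split2_tr opX opZ hX h1 x (f x) (hdeck x)).
      destruct (classic (U (f x))) as [H|H].
      - apply (split2_Z X Z opX opZ hX hZ hconn h1 hZ1 f finj fsurj hdeck U (f x) b); auto.
      - apply (split2_Z X Z opX opZ hX hZ hconn h1 hZ1 f finj fsurj hdeck (fun y => ~ U y) (f x) a); auto. }
    assert (Xs3 : forall x, exists P1 P2 P3, split3 opX x P1 P2 P3).
    { intro x. apply (split3_tr opX opZ hX h1 x (f x) (hdeck x)).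
      destruct (classic (U (f x))) as [H|H].
      - apply (split3_Z X Z opX opZ hX hZ hconn h1 hZ1 f fsurj hdeck Xs2 U (f x) b); auto.
      - apply (split3_Z X Z opX opZ hX hZ hconn h1 hZ1 f fsurj hdeck Xs2 (fun y => ~ U y) (f x) a); auto. }
    destruct (split3_countable opX hX hconn hsep Xs3) as [e he].
    destruct (fsurj a) as [xa Ea], (fsurj b) as [xb Eb].
    apply (countable_contra opX hX hconn hty xa xb e); auto.
    intros ->. congruence.
  - apply (Z_sep X Z opX opZ hX hsep h1 f finj fsurj hdeck).
  - split; auto. apply (Z_cr X Z opX opZ hX hZ hconn hty f finj fsurj hdeck).
Qed.
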